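(* Let $\|\cdot\|$ be a norm on $\mathbb{M}_n$ and let $\|\cdot\|_*$ be its dual norm. The closed unit ball of $\|\cdot\|_*$ is $C^*$-convex if and only if $\|\cdot\|$ is an $L$-norm.
   Context: $\mathbb{M}_n$ is the algebra of complex $n\times n$ matrices with identity $I$. The dual norm is $\|Y\|_*=\sup\{|\mathrm{Tr}(Y^*X)| : X\in\mathbb{M}_n,\ \|X\|\le 1\}$. A subset $\mathscr{K}\subseteq\mathbb{M}_n$ is $C^*$-convex if whenever $A_1,\dots,A_k\in\mathscr{K}$ and $C_1,\dots,C_k\in\mathbb{M}_n$ satisfy $\sum_{i=1}^k C_i^*C_i=I$, then $\sum_{i=1}^k C_i^*A_iC_i\in\mathscr{K}$. A norm $\|\cdot\|$ is an $L$-norm if $\sum_{i=1}^k\|C_iXC_i^*\|\le\|X\|$ for all $k$, all $X$ and all $C_1,\dots,C_k$ with $\sum_{i=1}^k C_i^*C_i=I$. *)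

(* Defs.v *)
From HB Require Import structures.
From mathcomp Require Import all_boot all_order all_algebra.
From mathcomp Require Import complex.
From mathcomp Require Import boolp classical_sets reals.
Set Implicit Arguments. Unset Strict Implicit. Unset Printing Implicit Defensive.
Import Order.TTheory GRing.Theory Num.Theory.
Local Open Scope ring_scope.
Local Open Scope classical_set_scope.

Section Defs.
Variables (R : realType) (n : nat).
Local Notation C := (R[i]).
Local Notation M := 'M[C]_n.

Definition cabs (z : C) : R := ComplexField.Normc.normc z.

Definition adjmx (A : M) : M := (map_mx (@conjc R) A)^T.

Definition is_norm (N : M -> R) : Prop :=
  [/\ (forall X, 0 <= N X),
      (forall X, N X = 0 -> X = 0),
      (forall (c : C) X, N (c *: X) = cabs c * N X) &
      (forall X Y, N (X + Y) <= N X + N Y)].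

Definition dual_norm (N : M -> R) (Y : M) : R :=
  sup [set cabs (\tr (adjmx Y *m X)) | X in [set X : M | N X <= 1]].

Definition Cstar_convex (K : set M) : Prop :=
  forall (k : nat) (A Cs : 'I_k -> M),
    (forall i, K (A i)) ->
    \sum_(i < k) adjmx (Cs i) *m Cs i = 1%:M ->
    K (\sum_(i < k) adjmx (Cs i) *m A i *m Cs i).

Definition is_Lnorm (N : M -> R) : Prop :=
  forall (k : nat) (X : M) (Cs : 'I_k -> M),
    \sum_(i < k) adjmx (Cs i) *m Cs i = 1%:M ->
    \sum_(i < k) N (Cs i *m X *m adjmx (Cs i)) <= N X.

End Defs.

(* Main.v *)
Require Import Defs.
From HB Require Import structures.
From mathcomp Require Import all_boot all_order all_algebra.
From mathcomp Require Import complex.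
From mathcomp Require Import boolp classical_sets reals topology normedtype derive.
Import numFieldNormedType.Exports.
Import Order.TTheory GRing.Theory Num.Theory.
Local Open Scope ring_scope.
Local Open Scope classical_set_scope.
Local Open Scope complex_scope.
Local Open Scope ring_scope.
From mathcomp Require Import lra ring.
Set Implicit Arguments. Unset Strict Implicit. Unset Printing Implicit Defensive.

Section Cabs.
Variable R : realType.
Local Notation C := (R[i]).

Lemma cabsE (z : C) : cabs z = Num.sqrt (complex.Re z ^+ 2 + complex.Im z ^+ 2).
Proof. by case: z. Qed.

Lemma cabs_normC (z : C) : `|z| = (cabs z)%:C.
Proof. by case: z. Qed.

Lemma cabs_ge0 (z : C) : 0 <= cabs z.
Proof. by rewrite cabsE sqrtr_ge0. Qed.

Lemma cabs_real (t : R) : cabs t%:C = `|t|.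
Proof. by rewrite cabsE /= expr0n /= addr0 sqrtr_sqr. Qed.

Lemma cabsM (x y : C) : cabs (x * y) = cabs x * cabs y.
Proof. exact: ComplexField.Normc.normcM. Qed.

Lemma cabs_conj (x : C) : cabs (x^*)%C = cabs x.
Proof. by case: x => a b; rewrite !cabsE /= sqrrN. Qed.

Lemma cabs_sqr (z : C) : cabs z ^+ 2 = complex.Re z ^+ 2 + complex.Im z ^+ 2.
Proof. by rewrite cabsE sqr_sqrtr // addr_ge0 // sqr_ge0. Qed.

Lemma Re_le_cabs (z : C) : complex.Re z <= cabs z.
Proof.
rewrite cabsE; apply: le_trans (ler_norm _) _.
by rewrite -sqrtr_sqr ler_wsqrtr // lerDl sqr_ge0.
Qed.

Lemma cabsD (x y : C) : cabs (x + y) <= cabs x + cabs y.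
Proof.
have := ler_normD x y; rewrite !cabs_normC -rmorphD /=.
by rewrite lecR.
Qed.

Lemma cabs_sum (I : Type) (s : seq I) (F : I -> C) :
  cabs (\sum_(i <- s) F i) <= \sum_(i <- s) cabs (F i).
Proof.
elim: s => [|a s IH]; first by rewrite !big_nil cabs_real normr0.
rewrite !big_cons; apply: le_trans (cabsD _ _) _; exact: lerD.
Qed.

Lemma cabs_eq0 (z : C) : cabs z = 0 -> z = 0.
Proof. exact: ComplexField.Normc.eq0_normc. Qed.

Lemma mulc_conj (z : C) : (z^*)%C * z = (cabs z ^+ 2)%:C.
Proof.
case: z => a b; rewrite cabs_sqr /=.
apply/eqP; rewrite eq_complex /=; apply/andP; split; apply/eqP.
  by rewrite mulNr opprK !expr2.
by rewrite mulNr mulrC subrr.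
Qed.

End Cabs.
Section Mx.
Variables (R : realType) (n : nat).
Local Notation C := (R[i]).
Local Notation M := 'M[C]_n.

Lemma adjmx_mul (A B : M) : adjmx (A *m B) = adjmx B *m adjmx A.
Proof. by rewrite /adjmx map_mxM trmx_mul. Qed.

Lemma adjmxK (A : M) : adjmx (adjmx A) = A.
Proof.
apply/matrixP => i j; rewrite /adjmx !mxE; exact: conjcK.
Qed.

Lemma adjmx_sum (I : Type) (s : seq I) (F : I -> M) :
  adjmx (\sum_(i <- s) F i) = \sum_(i <- s) adjmx (F i).
Proof.
elim: s => [|a s IH].
  by rewrite !big_nil; apply/matrixP => i j; rewrite /adjmx !mxE conjc0.
rewrite !big_cons -IH; apply/matrixP => i j; rewrite /adjmx !mxE.
exact: rmorphD.
Qed.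

Lemma tr_sum (I : Type) (s : seq I) (F : I -> M) :
  \tr (\sum_(i <- s) F i) = \sum_(i <- s) \tr (F i).
Proof. exact: raddf_sum. Qed.

Lemma tr_B (k : nat) (A Cs : 'I_k -> M) (X : M) :
  \tr (adjmx (\sum_(i < k) adjmx (Cs i) *m A i *m Cs i) *m X) =
  \sum_(i < k) \tr (adjmx (A i) *m (Cs i *m X *m adjmx (Cs i))).
Proof.
rewrite adjmx_sum mulmx_suml tr_sum; apply: eq_bigr => i _.
rewrite !adjmx_mul adjmxK -!mulmxA mxtrace_mulC -!mulmxA.
done.
Qed.

Lemma trZ (Y X : M) (c : C) : \tr (adjmx Y *m (c *: X)) = c * \tr (adjmx Y *m X).
Proof. by rewrite -scalemxAr mxtraceZ. Qed.

End Mx.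
Section Norm.
Variables (R : realType) (n : nat) (N : 'M[R[i]]_n -> R).
Hypothesis hN : is_norm N.
Local Notation C := (R[i]).
Local Notation M := 'M[C]_n.
Hypothesis bounded : forall Y : M, exists K, forall X, N X <= 1 -> cabs (\tr (adjmx Y *m X)) <= K.

Lemma N_ge0 X : 0 <= N X. Proof. by case: hN. Qed.
Lemma N_eq0 X : N X = 0 -> X = 0. Proof. by case: hN => _ H _ _; exact: H. Qed.
Lemma NZ (c : C) X : N (c *: X) = cabs c * N X. Proof. by case: hN. Qed.
Lemma ND X Y : N (X + Y) <= N X + N Y. Proof. by case: hN. Qed.
Lemma N0 : N 0 = 0.
Proof. by rewrite -(scale0r (0 : M)) NZ -[0 : C]/((0:R)%:C) cabs_real normr0 mul0r. Qed.
Lemma NN X : N (- X) = N X.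
Proof.
rewrite -scaleN1r.
have -> : (-1 : C) = (-1 : R)%:C by apply/eqP; rewrite eq_complex /= oppr0 !eqxx.
by rewrite NZ cabs_real normrN normr1 mul1r. Qed.
Lemma NZr (t : R) X : N (t%:C *: X) = `|t| * N X.
Proof. by rewrite NZ cabs_real. Qed.

Lemma dual_le1 Y : dual_norm N Y <= 1 -> forall X, cabs (\tr (adjmx Y *m X)) <= N X.
Proof.
move=> hY X.
have [/N_eq0 ->|NX0] := eqVneq (N X) 0.
  by rewrite mulmx0 linear0 -[0 : C]/((0:R)%:C) cabs_real normr0 N0.
have NXp : 0 < N X by rewrite lt0r NX0 N_ge0.
set X' := ((N X)^-1)%:C *: X.
have NX' : N X' <= 1 by rewrite NZr ger0_norm ?invr_ge0 ?N_ge0 // mulVf.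
have hub : has_ubound [set cabs (\tr (adjmx Y *m X)) | X in [set X : M | N X <= 1]].
  have [K HK] := bounded Y; exists K => _ [Z HZ <-]; exact: HK.
have := ub_le_sup hub (ex_intro2 _ _ X' NX' erefl).
rewrite /X' trZ cabsM cabs_real ger0_norm ?invr_ge0 ?N_ge0 // => h.
have := le_trans h hY.
by rewrite mulrC -ler_pdivlMr ?invr_gt0 // invrK mul1r.
Qed.

Lemma le1_dual Y : (forall X, N X <= 1 -> cabs (\tr (adjmx Y *m X)) <= 1) ->
  dual_norm N Y <= 1.
Proof.
move=> H; apply: ge_sup.
  by exists (cabs (\tr (adjmx Y *m 0))), 0 => //=; rewrite N0.
by move=> _ [Z HZ <-]; exact: H.
Qed.

End Norm.

Section Main.
Variables (R : realType) (n : nat) (N : 'M[R[i]]_n -> R).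
Hypothesis hN : is_norm N.
Local Notation C := (R[i]).
Local Notation M := 'M[C]_n.
Hypothesis bounded : forall Y : M, exists K, forall X, N X <= 1 -> cabs (\tr (adjmx Y *m X)) <= K.
Hypothesis norming : forall X0 : M, exists Y, dual_norm N Y <= 1 /\ \tr (adjmx Y *m X0) = (N X0)%:C.

Lemma cabs_sumP (I : Type) (s : seq I) (P : pred I) (F : I -> C) :
  cabs (\sum_(i <- s | P i) F i) <= \sum_(i <- s | P i) cabs (F i).
Proof.
apply: (big_ind2 (fun x y => cabs x <= y)).
- by rewrite -[0 : C]/((0:R)%:C) cabs_real normr0.
- by move=> x1 x2 y1 y2 h1 h2; apply: le_trans (cabsD _ _) _; exact: lerD.
- by [].
Qed.

Lemma main_equiv :
  (Cstar_convex [set Y : M | dual_norm N Y <= 1] <-> is_Lnorm N).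
Proof.
split.
- move=> H k X Cs hsum.
  have [Y HY] := choice (fun i : 'I_k => norming (Cs i *m X *m adjmx (Cs i))).
  have hB := H k Y Cs (fun i => (HY i).1) hsum.
  have := dual_le1 hN bounded hB X.
  rewrite tr_B.
  under eq_bigr => i _ do rewrite (HY i).2.
  rewrite -rmorph_sum cabs_real ger0_norm //.
  by apply: sumr_ge0 => i _; exact: N_ge0.
- move=> HL k A Cs hA hsum; rewrite /=.
  apply: le1_dual => // X hX.
  rewrite tr_B; apply: le_trans (cabs_sumP _ _ _) _.
  apply: le_trans hX; apply: le_trans (HL k X Cs hsum).
  by apply: ler_sum => i _; exact: dual_le1 (hA i) _.
Qed.

End Main.

Section HB.
Variables (R : realType) (n : nat) (N : 'M[R[i]]_n -> R).
Hypothesis hN : is_norm N.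
Local Notation C := (R[i]).
Local Notation M := 'M[C]_n.
Variables (T : eqType) (b : T -> M) (X0 : M).

Definition Fh (a : T -> R) (s : seq T) (mu : R) (lam : T -> R) :=
  mu * N X0 + \sum_(i <- s) lam i * a i.
Definition Vh (s : seq T) (mu : R) (lam : T -> R) : M :=
  mu%:C *: X0 + \sum_(i <- s) (lam i)%:C *: b i.

Lemma FhD a s mu mu' lam lam' :
  Fh a s (mu + mu') (fun i => lam i + lam' i) = Fh a s mu lam + Fh a s mu' lam'.
Proof.
rewrite /Fh mulrDl -addrA [in RHS]addrACA addrA; congr (_ + _).
by rewrite -big_split; apply: eq_bigr => i _; rewrite mulrDl.
Qed.

Lemma VhD s mu mu' lam lam' :
  Vh s (mu + mu') (fun i => lam i + lam' i) = Vh s mu lam + Vh s mu' lam'.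
Proof.
rewrite /Vh rmorphD scalerDl /= [in RHS]addrACA; congr (_ + _).
by rewrite -big_split; apply: eq_bigr => i _; rewrite rmorphD scalerDl.
Qed.

Lemma FhZ a s r mu lam :
  Fh a s (r * mu) (fun i => r * lam i) = r * Fh a s mu lam.
Proof.
rewrite /Fh mulrDr big_distrr /=; congr (_ + _); first by rewrite mulrA.
by apply: eq_bigr => i _; rewrite mulrA.
Qed.

Lemma VhZ s r mu lam :
  Vh s (r * mu) (fun i => r * lam i) = r%:C *: Vh s mu lam.
Proof.
rewrite /Vh scalerDr scalerA rmorphM; congr (_ + _).
rewrite scaler_sumr; apply: eq_bigr => i _; by rewrite scalerA rmorphM.
Qed.



Lemma hb_step (a : T -> R) (s : seq T) (x : T) : x \notin s ->
  (forall mu lam, Fh a s mu lam <= N (Vh s mu lam)) ->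
  exists c : R, forall mu lam,
    Fh (fun i => if i == x then c else a i) (x :: s) mu lam <= N (Vh (x :: s) mu lam).
Proof.
move=> xs IH.
pose z := b x.
pose E := [set r : R | exists mu lam, r = Fh a s mu lam - N (Vh s mu lam - z)].
have hub : forall mu lam, Fh a s mu lam - N (Vh s mu lam - z) <= N z.
  move=> mu lam; have h1 := IH mu lam.
  have h2 : N (Vh s mu lam) <= N (Vh s mu lam - z) + N z.
    by rewrite -{1}(GRing.subrK z (Vh s mu lam)); exact: ND.
  lra.
have key : forall mu lam mu' lam',
    Fh a s mu lam - N (Vh s mu lam - z) <= N (Vh s mu' lam' + z) - Fh a s mu' lam'.
  move=> mu lam mu' lam'.
  have h1 := IH (mu + mu') (fun i => lam i + lam' i).
  rewrite FhD VhD in h1.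
  have h2 : N (Vh s mu lam + Vh s mu' lam') <= N (Vh s mu lam - z) + N (Vh s mu' lam' + z).
    have e : Vh s mu lam - z + (Vh s mu' lam' + z) = Vh s mu lam + Vh s mu' lam'.
      by rewrite [Vh s mu' lam' + z]addrC subrKA.
    by rewrite -e; exact: ND.
  lra.
pose c := sup E.
have E0 : E !=set0 by exists (Fh a s 0 (fun=> 0) - N (Vh s 0 (fun=> 0) - z)), 0, (fun=> 0).
have hubE : has_ubound E by exists (N z) => r [mu [lam ->]]; exact: hub.
have cub : forall mu lam, Fh a s mu lam - N (Vh s mu lam - z) <= c.
  by move=> mu lam; apply: (ub_le_sup hubE); exists mu, lam.
have clb : forall mu lam, c <= N (Vh s mu lam + z) - Fh a s mu lam.
  by move=> mu lam; apply: ge_sup E0 _ => r [mu' [lam' ->]]; exact: key.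
exists c => mu lam.
have eF : Fh (fun i => if i == x then c else a i) (x :: s) mu lam = lam x * c + Fh a s mu lam.
  rewrite /Fh big_cons eqxx addrCA; congr (_ + (_ + _)).
  apply: eq_big_seq => i iis; case: eqP => // ix; by rewrite -ix iis in xs.
have eV : Vh (x :: s) mu lam = Vh s mu lam + (lam x)%:C *: z.
  by rewrite /Vh big_cons [_ *: b x + _]addrC addrA.
rewrite eF eV; set t := lam x.
have [tlt0|tgt0|->] := ltrgtP t 0.
- have rp : 0 < (- t)^-1 by rewrite invr_gt0 oppr_gt0.
  have h := cub ((- t)^-1 * mu) (fun i => (- t)^-1 * lam i).
  rewrite FhZ VhZ in h.
  have e : ((- t)^-1)%:C *: Vh s mu lam - z = ((- t)^-1)%:C *: (Vh s mu lam + t%:C *: z).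
    rewrite [RHS]scalerDr [in RHS]scalerA -rmorphM.
    have -> : (- t)^-1 * t = -1 by rewrite invrN mulNr mulVf ?lt_eqF.
    by rewrite rmorphN rmorph1 scaleN1r.
  rewrite e (NZr hN) (ger0_norm (ltW rp)) in h.
  have e1 : (- t) * (- t)^-1 = 1 by rewrite mulfV // oppr_eq0 lt_eqF.
  have h3 : (- t)^-1 * (Fh a s mu lam - N (Vh s mu lam + t%:C *: z)) <= c.
    by rewrite mulrBr; exact: h.
  have h4 := ler_wpM2l (ltW (ltac:(by rewrite oppr_gt0) : 0 < - t)) h3.
  rewrite mulrA e1 mul1r in h4.
  lra.
- have rp : 0 < t^-1 by rewrite invr_gt0.
  have h := clb (t^-1 * mu) (fun i => t^-1 * lam i).
  rewrite FhZ VhZ in h.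
  have e : (t^-1)%:C *: Vh s mu lam + z = (t^-1)%:C *: (Vh s mu lam + t%:C *: z).
    rewrite [RHS]scalerDr [in RHS]scalerA -rmorphM mulVf ?gt_eqF //.
    by rewrite rmorph1 scale1r.
  rewrite e (NZr hN) (ger0_norm (ltW rp)) in h.
  have e1 : t * t^-1 = 1 by rewrite mulfV // gt_eqF.
  have h3 : t^-1 * (N (Vh s mu lam + t%:C *: z) - Fh a s mu lam) >= c.
    by rewrite mulrBr; exact: h.
  have h4 := ler_wpM2l (ltW tgt0) h3.
  rewrite mulrA e1 mul1r in h4.
  lra.
- rewrite mul0r add0r.
  have -> : (0 : R)%:C = 0 by [].
  by rewrite scale0r addr0.
Qed.

Lemma hb_all (s : seq T) : uniq s ->
  exists a : T -> R, forall mu lam, Fh a s mu lam <= N (Vh s mu lam).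
Proof.
elim: s => [_|x s IHs /= /andP [xs us]].
  exists (fun=> 0) => mu lam; rewrite /Fh /Vh !big_nil !addr0 (NZr hN).
  by apply: ler_wpM2r; [exact: (N_ge0 hN) | exact: ler_norm].
have [a Ha] := IHs us.
have [c Hc] := hb_step xs Ha.
by exists (fun i => if i == x then c else a i).
Qed.

End HB.

Section Norming.
Variables (R : realType) (n : nat) (N : 'M[R[i]]_n -> R).
Hypothesis hN : is_norm N.
Local Notation C := (R[i]).
Local Notation M := 'M[C]_n.
Local Notation T := ('I_n * 'I_n * bool)%type.

Definition bT (t : T) : M :=
  let: (j, l, bb) := t in if bb then 'i%C *: delta_mx j l else delta_mx j l.

Definition coefT (X : M) (t : T) : R :=
  let: (j, l, bb) := t in if bb then complex.Im (X j l) else complex.Re (X j l).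

Lemma sum_enumT (V : zmodType) (F : T -> V) :
  \sum_(t <- enum {: T}) F t = \sum_j \sum_l (F (j, l, true) + F (j, l, false)).
Proof.
rewrite big_enum /=.
transitivity (\sum_(t : T) F t); first by apply: eq_bigl => t; rewrite inE.
rewrite (eq_bigr (fun t => F (t.1, t.2))); last by case.
rewrite -(pair_bigA _ (fun p bb => F (p, bb))) /=.
rewrite (eq_bigr (fun p : 'I_n * 'I_n => F (p.1, p.2, true) + F (p.1, p.2, false))).
  by rewrite -(pair_bigA _ (fun j l => F (j, l, true) + F (j, l, false))).
by case=> [j l] _; rewrite big_bool.
Qed.

Lemma coefT_span (X : M) : \sum_(t <- enum {: T}) (coefT X t)%:C *: bT t = X.
Proof.
rewrite sum_enumT [RHS]matrix_sum_delta.
apply: eq_bigr => j _; apply: eq_bigr => l _ /=.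
rewrite scalerA -scalerDl; congr (_ *: _).
rewrite addrC mulrC -complexE. reflexivity.
Qed.

Lemma Re_sum (I : Type) (s : seq I) (F : I -> C) :
  complex.Re (\sum_(i <- s) F i) = \sum_(i <- s) complex.Re (F i).
Proof.
elim: s => [|x s IH]; first by rewrite !big_nil.
by rewrite !big_cons -IH; case: (F x) => ? ?; case: (\sum_(i <- s) F i).
Qed.

Lemma norming X0 : exists Y : M,
  dual_norm N Y <= 1 /\ \tr (adjmx Y *m X0) = (N X0)%:C.
Proof.
have [a Ha] := hb_all hN bT X0 (enum_uniq {: T}).
pose Y : M := \matrix_(j, l) ((a (j, l, false))%:C + 'i%C * (a (j, l, true))%:C).
have ReY : forall X, complex.Re (\tr (adjmx Y *m X)) =
    \sum_(t <- enum {: T}) coefT X t * a t.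
  move=> X; rewrite sum_enumT /mxtrace Re_sum (exchange_big) /=.
  apply: eq_bigr => j _; rewrite !mxE Re_sum; apply: eq_bigr => l _.
  rewrite !mxE /=.
  case: (X l j) => x1 x2 /=.
  ring.
have tle : forall X, complex.Re (\tr (adjmx Y *m X)) <= N X.
  move=> X; rewrite ReY.
  have := Ha 0 (coefT X); rewrite /Fh /Vh mul0r add0r coefT_span.
  by rewrite rmorph0 scale0r add0r.
have tabs : forall X, cabs (\tr (adjmx Y *m X)) <= N X.
  move=> X; set w := \tr (adjmx Y *m X).
  have h := tle ((w^*)%C *: X).
  rewrite trZ mulc_conj /= (NZ hN) cabs_conj in h.
  have h1 := cabs_ge0 w; have h2 := N_ge0 hN X.
  nra.
exists Y; split.
  by apply: (le1_dual hN) => X hX; exact: le_trans (tabs X) hX.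
set w0 := \tr (adjmx Y *m X0).
have h1 := Ha 1 (fun t => - coefT X0 t).
rewrite /Fh /Vh mul1r rmorph1 scale1r in h1.
rewrite (eq_bigr (fun t => - (coefT X0 t * a t))) in h1; last by move=> t _; rewrite mulNr.
rewrite (eq_bigr (fun t => - ((coefT X0 t)%:C *: bT t))) in h1; last first.
  by move=> t _; rewrite rmorphN scaleNr.
rewrite !sumrN coefT_span -ReY subrr (N0 hN) in h1.
have h2 := tabs X0; have h3 := Re_le_cabs w0.
have eRe : complex.Re w0 = N X0 by lra.
have h4 := cabs_sqr w0.
have eIm : complex.Im w0 = 0.
  have : complex.Im w0 ^+ 2 = 0.
    have ec : cabs w0 = N X0 by lra.
    rewrite ec eRe in h4; lra.
  by move/eqP; rewrite sqrf_eq0 => /eqP.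
by apply/eqP; rewrite eq_complex /= eRe eIm !eqxx.
Qed.

End Norming.

Section Bounded.
Variables (R : realType) (n : nat) (N : 'M[R[i]]_n -> R).
Hypothesis hN : is_norm N.
Local Notation C := (R[i]).
Local Notation M := 'M[C]_n.
Local Notation T := ('I_n * 'I_n * bool)%type.
Local Notation k := #|{: T}|.

Definition toM (v : 'rV[R]_k) : M :=
  \matrix_(j, l) ((v 0 (enum_rank (j, l, false)))%:C + 'i%C * (v 0 (enum_rank (j, l, true)))%:C).

Definition ofM (X : M) : 'rV[R]_k := \row_i coefT X (enum_val i).

Lemma coefT_toM v t : coefT (toM v) t = v 0 (enum_rank t).
Proof.
by case: t => [[j l] []]; rewrite /coefT mxE /=; ring.
Qed.

Lemma ofM_toM v : ofM (toM v) = v.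
Proof.
apply/rowP => i; rewrite mxE coefT_toM enum_valK.
by congr (v _ _); apply: val_inj; rewrite /= ord1.
Qed.

Lemma toM_ofM X : toM (ofM X) = X.
Proof.
apply/matrixP => j l; rewrite !mxE !enum_rankK /=.
by rewrite [RHS]complexE.
Qed.

Lemma toMB v w : toM (v - w) = toM v - toM w.
Proof.
apply/matrixP => j l; rewrite !mxE !rmorphB /=; ring.
Qed.

Lemma toMZ (r : R) v : toM (r *: v) = r%:C *: toM v.
Proof.
apply/matrixP => j l; rewrite !mxE !rmorphM /=; ring.
Qed.

Lemma toM_span v : toM v = \sum_(t <- enum {: T}) (v 0 (enum_rank t))%:C *: bT R t.
Proof.
rewrite -[LHS]coefT_span; apply: eq_bigr => t _; by rewrite coefT_toM.
Qed.

Lemma N_sum_le (s : seq T) (c : T -> R) :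
  N (\sum_(t <- s) (c t)%:C *: bT R t) <= \sum_(t <- s) `|c t| * N (bT R t).
Proof.
elim: s => [|x s IH]; first by rewrite !big_nil (N0 hN).
rewrite !big_cons; apply: le_trans (ND hN _ _) _.
by rewrite (NZr hN); apply: lerD.
Qed.

Definition Kup := \sum_(t <- enum {: T}) N (bT R t).

Lemma entry_le (v : 'rV[R]_k) i : `|v 0 i| <= `|v|.
Proof.
rewrite [leRHS]/Num.norm /= mx_normrE; apply/bigmax_geP; right; by exists (0, i).
Qed.

Lemma Kup_ge0 : 0 <= Kup.
Proof. by apply: sumr_ge0 => t _; exact: (N_ge0 hN). Qed.

Lemma Nup v : N (toM v) <= Kup * `|v|.
Proof.
rewrite toM_span; apply: le_trans (N_sum_le _ _) _.
rewrite /Kup mulr_suml; apply: ler_sum => t _; rewrite mulrC.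
apply: ler_wpM2l; [exact: (N_ge0 hN) | exact: entry_le].
Qed.

Lemma h_lip v w : `|N (toM v) - N (toM w)| <= Kup * `|v - w|.
Proof.
apply: le_trans (Nup (v - w)); rewrite toMB.
have h1 : N (toM v) <= N (toM v - toM w) + N (toM w).
  by rewrite -{1}(GRing.subrK (toM w) (toM v)); exact: ND.
have h2 : N (toM w) <= N (toM v - toM w) + N (toM v).
  have -> : toM v - toM w = - (toM w - toM v) by rewrite opprB.
  rewrite (NN hN) -{1}(GRing.subrK (toM v) (toM w)); exact: ND.
rewrite ler_norml; apply/andP; split; lra.
Qed.

Lemma h_cont : continuous (fun v : 'rV[R]_k => N (toM v)).
Proof.
move=> x; apply/(@cvgrPdist_lt _ _ _ (nbhs x) (nbhs_filter x)) => e e0.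
have K0 := Kup_ge0.
apply/(@nbhs_normP _ _ x); exists (e / (Kup + 1)).
  by rewrite /= divr_gt0 // ltr_wpDl.
move=> t /= hxt.
apply: le_lt_trans (h_lip x t) _.
have K1 : 0 < Kup + 1 by rewrite ltr_wpDl.
rewrite ltr_pdivlMr // in hxt.
apply: le_lt_trans _ hxt.
rewrite mulrC; apply: ler_wpM2l; first exact: normr_ge0.
by rewrite lerDl.
Qed.

Lemma lower_bound : exists m : R, 0 < m /\ forall v, m * `|v| <= N (toM v).
Proof.
pose S := [set v : 'rV[R]_k | `|v| = 1].
have scale1 : forall v : 'rV[R]_k, v != 0 -> S (`|v|^-1 *: v).
  move=> v v0; rewrite /S /= normrZ ger0_norm ?invr_ge0 ?normr_ge0 //.
  by rewrite mulVf // normr_eq0.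
have [S0|S0] := pselect (S !=set0); last first.
  exists 1; split => // v; rewrite mul1r.
  have [->|v0] := eqVneq v 0; first by rewrite normr0; exact: (N_ge0 hN).
  by exfalso; apply: S0; exists (`|v|^-1 *: v); exact: scale1.
have cS : compact S.
  apply: bounded_closed_compact.
    exists 1; split; first by rewrite num_real.
    by move=> M M1 v /= ->; exact: ltW.
  have -> : S = (fun v : 'rV[R]_k => `|v|) @^-1` [set (1:R)] by [].
  apply: preimage_closed; last exact: closed_eq.
  by move=> x _; exact: norm_continuous.
have hc : {within S, continuous (fun v : 'rV[R]_k => N (toM v))}.
  by apply: continuous_subspaceT; exact: h_cont.
have [c cin cmin] := EVT_min_rV S0 cS hc.
have cS' : S c by rewrite inE in cin.
have c0 : c != 0 by apply/eqP => c0; move: cS'; rewrite /S /= c0 normr0 => /eqP; rewrite eq_sym oner_eq0.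
have mpos : 0 < N (toM c).
  rewrite lt0r (N_ge0 hN) andbT; apply/eqP => /(N_eq0 hN) h0.
  have t0 : toM 0 = 0 by rewrite -(subrr (0 : 'rV[R]_k)) toMB subrr.
  by move/eqP: c0; apply; rewrite -(ofM_toM c) h0 -t0 ofM_toM.
exists (N (toM c)); split => // v.
have [->|v0] := eqVneq v 0; first by rewrite normr0 mulr0; exact: (N_ge0 hN).
have := cmin _ (mem_set (scale1 v v0)).
rewrite toMZ (NZr hN) ger0_norm ?invr_ge0 ?normr_ge0 //.
have vp : 0 < `|v| by rewrite normr_gt0.
by rewrite ler_pdivlMl // mulrC.
Qed.

Lemma cabs_le_ReIm (z : C) : cabs z <= `|complex.Re z| + `|complex.Im z|.
Proof.
have h1 := cabs_sqr z; have h2 := cabs_ge0 z.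
have h3 := normr_ge0 (complex.Re z); have h4 := normr_ge0 (complex.Im z).
have e3 : `|complex.Re z| ^+ 2 = complex.Re z ^+ 2 by rewrite real_normK // num_real.
have e4 : `|complex.Im z| ^+ 2 = complex.Im z ^+ 2 by rewrite real_normK // num_real.
move: h1 h2 h3 h4 e3 e4.
set s := cabs z; set a := `|complex.Re z|; set b := `|complex.Im z|.
set a2 := complex.Re z ^+ 2; set b2 := complex.Im z ^+ 2 => h1 h2 h3 h4 e3 e4.
nra.
Qed.

Lemma entry_bound : exists K0 : R, 0 <= K0 /\ forall (X : M) j l, cabs (X j l) <= K0 * N X.
Proof.
have [m [mp Hm]] := lower_bound.
exists (2 / m); split; first by rewrite divr_ge0 // ltW.
move=> X j l.
have hv := Hm (ofM X); rewrite toM_ofM in hv.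
have e1 : complex.Re (X j l) = ofM X 0 (enum_rank (j, l, false)).
  by rewrite mxE enum_rankK.
have e2 : complex.Im (X j l) = ofM X 0 (enum_rank (j, l, true)).
  by rewrite mxE enum_rankK.
have b1 := entry_le (ofM X) (enum_rank (j, l, false)).
have b2 := entry_le (ofM X) (enum_rank (j, l, true)).
rewrite -e1 in b1; rewrite -e2 in b2.
have := cabs_le_ReIm (X j l).
move: hv b1 b2; set nv := `|ofM X| => hv b1 b2 h.
have hnv : nv <= N X / m by rewrite ler_pdivlMr // mulrC.
have : cabs (X j l) <= 2 * (N X / m) by lra.
by rewrite mulrA mulrAC.
Qed.

Lemma bounded_dual (Y : M) : exists K, forall X, N X <= 1 -> cabs (\tr (adjmx Y *m X)) <= K.
Proof.
have [K0 [K0p HK]] := entry_bound.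
exists (\sum_l \sum_j cabs (Y j l) * K0) => X hX.
rewrite /mxtrace; apply: le_trans (cabs_sumP _ _ _) _.
apply: ler_sum => l _; rewrite mxE; apply: le_trans (cabs_sumP _ _ _) _.
apply: ler_sum => j _; rewrite !mxE cabsM cabs_conj.
apply: ler_wpM2l; first exact: cabs_ge0.
apply: le_trans (HK X j l) _.
by rewrite -[leRHS]mulr1; apply: ler_wpM2l.
Qed.

End Bounded.

Theorem theorem2p5 (R : realType) (n : nat) (N : 'M[R[i]]_n -> R) :
  is_norm N ->
  (Cstar_convex [set Y : 'M[R[i]]_n | dual_norm N Y <= 1] <-> is_Lnorm N).
Proof.
move=> hN; apply: main_equiv => //.
- exact: bounded_dual.
- exact: norming.
Qed.
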